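(* Let $x>0$, $y\ge 0$, $z>0$ (the approximation is intended for the regime $y,z\ll x$). Let $a=(y+z)/2$ and $g=\sqrt{yz}$. Then $$R_D(x,y,z)=\frac{3}{\sqrt x}\left(\frac{1}{g+z}-\frac{r}{4x}\right),$$ where $$\frac{1}{1-g/x}\ln\frac{2x}{a+g}-\frac{2z}{g+z}<r<\frac{1}{1-a/2x}\ln\frac{8x}{a+g}.$$
   Context: For $x,y\ge0$ not both zero and $z>0$: $R_D(x,y,z)=\frac32\int_0^\infty[(t+x)(t+y)]^{-1/2}(t+z)^{-3/2}\,dt$.
   Formalization: The regime $y,z\ll x$ is taken as the hypotheses g < x and a < 2x, both assumed in addition to x > 0, y ≥ 0, z > 0. The paper assumes this as well. *)

(* Defs.v *)
From Stdlib Require Import Reals.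
From Coquelicot Require Import Coquelicot.
Open Scope R_scope.

Definition RD_integrand (x y z t : R) : R :=
  3 / 2 * / sqrt ((t + x) * (t + y)) * / ((t + z) * sqrt (t + z)).

Definition is_RD (x y z v : R) : Prop :=
  is_RInt_gen (RD_integrand x y z) (at_right 0) (Rbar_locally p_infty) v.

(* Main.v *)
Require Import Defs.
From Stdlib Require Import Reals Lra.
From Coquelicot Require Import Coquelicot.
Open Scope R_scope.

Lemma ballR (x e y : R) : ball x e y <-> Rabs (y - x) < e.
Proof. split; intro H; exact H. Qed.

Lemma ev_pos_right : at_right 0 (fun t => 0 < t).
Proof. exists (mkposreal 1 Rlt_0_1). intros; auto. Qed.

Lemma ev_pos_inf : Rbar_locally p_infty (fun t => 0 < t).
Proof. exists 0. intros; auto. Qed.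

Lemma deriv_gen (G g : R -> R) (l0 l1 : R) :
  (forall t, 0 < t -> is_derive G t (g t)) ->
  (forall t, 0 < t -> continuous g t) ->
  filterlim G (at_right 0) (locally l0) ->
  filterlim G (Rbar_locally p_infty) (locally l1) ->
  is_RInt_gen g (at_right 0) (Rbar_locally p_infty) (l1 - l0).
Proof.
  intros HG Hgc H0 H1 P [eps HP].
  pose proof (proj1 (filterlim_locally G l0) H0 (pos_div_2 eps)) as E0.
  pose proof (proj1 (filterlim_locally G l1) H1 (pos_div_2 eps)) as E1.
  unfold filtermapi.
  apply (Filter_prod _ _ _ (fun a => 0 < a /\ ball l0 (pos_div_2 eps) (G a))
                           (fun b => 0 < b /\ ball l1 (pos_div_2 eps) (G b))).
  - apply filter_and; [apply ev_pos_right | exact E0].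
  - apply filter_and; [apply ev_pos_inf | exact E1].
  - intros a b [Ha Ga] [Hb Gb]. exists (G b - G a). split.
    + simpl. apply (@is_RInt_derive R_CompleteNormedModule G g).
      * intros z Hz. apply HG. destruct Hz as [Hz _]. eapply Rlt_le_trans; [|exact Hz].
        apply Rmin_case; auto.
      * intros z Hz. apply Hgc. destruct Hz as [Hz _]. eapply Rlt_le_trans; [|exact Hz].
        apply Rmin_case; auto.
    + apply HP. apply ballR. 
      assert (Ga' : Rabs (G a - l0) < eps/2) by exact Ga.
      assert (Gb' : Rabs (G b - l1) < eps/2) by exact Gb.
      replace (G b - G a - (l1 - l0)) with ((G b - l1) - (G a - l0)) by ring.
      eapply Rle_lt_trans. apply Rabs_triang. rewrite Rabs_Ropp. lra.
Qed.

Lemma nonneg_gen (h : R -> R) (l : R) :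
  is_RInt_gen h (at_right 0) (Rbar_locally p_infty) l ->
  (forall t, 0 < t -> 0 <= h t) -> 0 <= l.
Proof.
  intros Hl Hh.
  assert (Hn : norm l <= l).
  { apply (@RInt_gen_norm R_CompleteNormedModule (at_right 0) (Rbar_locally p_infty)
             (at_right_proper_filter 0) (Rbar_locally_filter p_infty) h h l l); auto.
    - apply (Filter_prod _ _ _ (fun a => 0 < a < 1) (fun b => 1 < b)).
      + exists (mkposreal 1 Rlt_0_1). intros y Hy Hy0.
        assert (Hy' : Rabs (y - 0) < 1) by exact Hy.
        split; auto. rewrite Rminus_0_r in Hy'. apply Rabs_def2 in Hy'. lra.
      + exists 1. auto.
      + intros; simpl; lra.
    - apply (Filter_prod _ _ _ (fun a => 0 < a) (fun b => True)).
      + apply ev_pos_right.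
      + exists 0; auto.
      + intros a b Ha _ z Hz. simpl in Hz. 
        assert (0 <= h z) by (apply Hh; lra).
        change (Rabs (h z) <= h z). rewrite Rabs_pos_eq; lra. }
  change (Rabs l <= l) in Hn. pose proof (Rabs_pos l). lra.
Qed.

Lemma RInt_abs_le_G (f g G : R -> R) (a b : R) :
  0 < a -> 0 < b ->
  (forall t, 0 < t -> continuous f t) ->
  (forall t, 0 < t -> Rabs (f t) <= g t) ->
  (forall t, 0 < t -> is_derive G t (g t)) ->
  (forall t, 0 < t -> continuous g t) ->
  Rabs (RInt f a b) <= Rabs (G b - G a).
Proof.
  intros Ha Hb Hfc Hfg HG Hgc.
  assert (Hex : forall u v, 0 < u -> 0 < v -> ex_RInt f u v).
  { intros u v Hu Hv. apply (@ex_RInt_continuous R_CompleteNormedModule). intros z Hz. apply Hfc.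
    destruct Hz as [Hz _]. eapply Rlt_le_trans; [|exact Hz].
    apply Rmin_case; auto. }
  assert (HgI : forall u v, 0 < u -> 0 < v -> is_RInt g u v (G v - G u)).
  { intros u v Hu Hv. apply (@is_RInt_derive R_CompleteNormedModule G g).
    - intros z Hz. apply HG. destruct Hz as [Hz _]. eapply Rlt_le_trans; [|exact Hz].
      apply Rmin_case; auto.
    - intros z Hz. apply Hgc. destruct Hz as [Hz _]. eapply Rlt_le_trans; [|exact Hz].
      apply Rmin_case; auto. }
  assert (Key : forall u v, 0 < u -> 0 < v -> u <= v -> Rabs (RInt f u v) <= Rabs (G v - G u)).
  { intros u v Hu Hv Huv.
    eapply Rle_trans. apply abs_RInt_le; auto.
    rewrite <- (is_RInt_unique g u v _ (HgI u v Hu Hv)).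
    eapply Rle_trans; [|apply Rle_abs].
    apply RInt_le; auto.
    - apply (@ex_RInt_continuous R_CompleteNormedModule). intros z Hz.
      apply continuous_comp with (g := Rabs). apply Hfc.
      destruct Hz as [Hz _]. eapply Rlt_le_trans; [|exact Hz].
      apply Rmin_case; auto.
      apply continuous_Rabs.
    - eexists; apply HgI; auto.
    - intros z Hz. apply Hfg. lra. }
  destruct (Rle_lt_dec a b) as [Hab|Hab].
  - apply Key; auto.
  - rewrite <- (opp_RInt_swap f b a) by (apply Hex; auto).
    change (Rabs (- RInt f b a) <= Rabs (G b - G a)). rewrite Rabs_Ropp.
    replace (G b - G a) with (- (G a - G b)) by ring. rewrite Rabs_Ropp.
    apply Key; auto; lra.
Qed.

Lemma exists_gen (f g G : R -> R) (l0 l1 : R) :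
  (forall t, 0 < t -> continuous f t) ->
  (forall t, 0 < t -> Rabs (f t) <= g t) ->
  (forall t, 0 < t -> is_derive G t (g t)) ->
  (forall t, 0 < t -> continuous g t) ->
  filterlim G (at_right 0) (locally l0) ->
  filterlim G (Rbar_locally p_infty) (locally l1) ->
  exists l, is_RInt_gen f (at_right 0) (Rbar_locally p_infty) l.
Proof.
  intros Hfc Hfg HG Hgc H0 H1.
  assert (Hex : forall u v, 0 < u -> 0 < v -> ex_RInt f u v).
  { intros u v Hu Hv. apply (@ex_RInt_continuous R_CompleteNormedModule). intros z Hz. apply Hfc.
    destruct Hz as [Hz _]. eapply Rlt_le_trans; [|exact Hz].
    apply Rmin_case; auto. }
  set (F := filter_prod (at_right 0) (Rbar_locally p_infty)).
  assert (PF : ProperFilter F).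
  { exact (@filter_prod_proper _ _ _ _ (at_right_proper_filter 0) (Rbar_locally_filter p_infty)). }
  destruct (proj1 (@filterlim_locally_cauchy (R*R) R_CompleteSpace F PF
                     (fun ab => RInt f (fst ab) (snd ab)))) as [l Hl].
  { intros eps.
    pose proof (proj1 (filterlim_locally G l0) H0 (pos_div_2 (pos_div_2 eps))) as E0.
    pose proof (proj1 (filterlim_locally G l1) H1 (pos_div_2 (pos_div_2 eps))) as E1.
    exists (fun ab => (0 < fst ab /\ ball l0 (pos_div_2 (pos_div_2 eps)) (G (fst ab))) /\
                  (0 < snd ab /\ ball l1 (pos_div_2 (pos_div_2 eps)) (G (snd ab)))).
    split.
    - apply (Filter_prod _ _ _ (fun a => 0 < a /\ ball l0 (pos_div_2 (pos_div_2 eps)) (G a))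
                           (fun b => 0 < b /\ ball l1 (pos_div_2 (pos_div_2 eps)) (G b))).
      + apply filter_and; [apply ev_pos_right | exact E0].
      + apply filter_and; [apply ev_pos_inf | exact E1].
      + intros a b Ha Hb. simpl. split; auto.
    - intros [a b] [a' b'] [[Ha Ga] [Hb Gb]] [[Ha' Ga'] [Hb' Gb']]. simpl in *.
      apply ballR.
      assert (A1 : Rabs (G a - l0) < eps/2/2) by exact Ga.
      assert (A2 : Rabs (G b - l1) < eps/2/2) by exact Gb.
      assert (A3 : Rabs (G a' - l0) < eps/2/2) by exact Ga'.
      assert (A4 : Rabs (G b' - l1) < eps/2/2) by exact Gb'.
      assert (C1 : RInt f a' b' = RInt f a' a + RInt f a b + RInt f b b').
      { assert (e1 := RInt_Chasles f a' a b (Hex _ _ Ha' Ha) (Hex _ _ Ha Hb)).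
        assert (e2 := RInt_Chasles f a' b b' (Hex _ _ Ha' Hb) (Hex _ _ Hb Hb')).
        rewrite <- e2, <- e1. reflexivity. }
      rewrite C1.
      replace (RInt f a' a + RInt f a b + RInt f b b' - RInt f a b)
        with (RInt f a' a + RInt f b b') by ring.
      pose proof (RInt_abs_le_G f g G a' a Ha' Ha Hfc Hfg HG Hgc) as B1.
      pose proof (RInt_abs_le_G f g G b b' Hb Hb' Hfc Hfg HG Hgc) as B2.
      assert (B3 : Rabs (G a - G a') < eps/2).
      { replace (G a - G a') with ((G a - l0) - (G a' - l0)) by ring.
        eapply Rle_lt_trans. apply Rabs_triang. rewrite Rabs_Ropp. lra. }
      assert (B4 : Rabs (G b' - G b) < eps/2).
      { replace (G b' - G b) with ((G b' - l1) - (G b - l1)) by ring.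
        eapply Rle_lt_trans. apply Rabs_triang. rewrite Rabs_Ropp. lra. }
      eapply Rle_lt_trans. apply Rabs_triang. lra. }
  exists l. intros P HP. unfold filtermapi.
  pose proof (Hl P HP) as HlP. unfold filtermap in HlP.
  assert (Hpos : F (fun ab => 0 < fst ab /\ 0 < snd ab)).
  { apply (Filter_prod _ _ _ (fun a => 0 < a) (fun b => 0 < b)).
    apply ev_pos_right. apply ev_pos_inf. intros; simpl; auto. }
  generalize (filter_and _ _ HlP Hpos). apply filter_imp.
  intros [a b] [HP' [Ha Hb]]. exists (RInt f a b). split; auto.
  simpl. apply (@RInt_correct R_CompleteNormedModule). apply Hex; auto.
Qed.

Definition Sq (y z t : R) := sqrt ((t+y)*(t+z)).
Definition wf (y z t : R) := / (sqrt (t+y) * ((t+z) * sqrt (t+z))).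
Definition Hw (y z t : R) := -2 / (Sq y z t + t + z).

Lemma D1 y z t : 0 < t -> 0 <= y -> 0 < z -> is_derive (Hw y z) t (wf y z t).
Proof.
  intros Ht Hy Hz. unfold Hw, Sq, wf.
  auto_derive.
  { repeat split; try nra. 
    assert (0 <= sqrt ((t + y) * (t + z))) by apply sqrt_pos. lra. }
  rewrite sqrt_mult by lra.
  assert (hq : sqrt (t+y) * sqrt (t+y) = t + y) by (apply sqrt_sqrt; lra).
  assert (hc : sqrt (t+z) * sqrt (t+z) = t + z) by (apply sqrt_sqrt; lra).
  assert (pq : 0 < sqrt (t+y)) by (apply sqrt_lt_R0; lra).
  assert (pc : 0 < sqrt (t+z)) by (apply sqrt_lt_R0; lra).
  generalize dependent (sqrt (t+y)). generalize dependent (sqrt (t+z)).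
  intros c hc pc q hq pq.
  assert (et : t = c*c - z) by lra. subst t.
  assert (ey : y = q*q - c*c + z) by lra. subst y.
  field. repeat split; nra.
Qed.

Definition Kf (y z A t : R) := ln ((Sq y z t + t + (y+z)/2) / (Sq y z t + t + A)).
Definition Pf (N t : R) := -1/(t+N) + N/(t+N)^2 - N^2/(3*(t+N)^3).

Lemma D2 y z A t : 0 < t -> 0 <= y -> 0 < z -> 0 < A ->
  is_derive (Kf y z A) t ((A - (y+z)/2) / (Sq y z t * (Sq y z t + t + A))).
Proof.
  intros Ht Hy Hz HA. unfold Kf, Sq.
  assert (0 < sqrt ((t + y) * (t + z))) by (apply sqrt_lt_R0; nra).
  auto_derive.
  { repeat split; try nra.
    apply Rdiv_lt_0_compat; lra. }
  generalize dependent (sqrt ((t + y) * (t + z))). intros S HS.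
  field. repeat split; lra.
Qed.

Lemma D3 N t : 0 < t -> 0 < N -> is_derive (Pf N) t (t^2/(t+N)^4).
Proof.
  intros Ht HN. unfold Pf. auto_derive.
  { repeat split; apply Rgt_not_eq; repeat apply Rmult_lt_0_compat; lra. }
  field. lra.
Qed.

Lemma cont_Sq y z t : continuous (Sq y z) t.
Proof.
  unfold Sq. apply continuous_sqrt_comp. apply (@ex_derive_continuous R_AbsRing R_NormedModule). auto_derive. auto.
Qed.

Lemma cont_lin (u v : R -> R) (t : R) : continuous u t -> continuous v t ->
  continuous (fun s => u s + v s) t.
Proof. intros. apply (continuous_plus u v); auto. Qed.

Lemma cont_mul (u v : R -> R) (t : R) : continuous u t -> continuous v t ->
  continuous (fun s => u s * v s) t.
Proof. intros. apply (continuous_mult u v); auto. Qed.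

Lemma cont_inv (u : R -> R) (t : R) : continuous u t -> u t <> 0 ->
  continuous (fun s => / u s) t.
Proof. intros. apply (continuous_Rinv_comp u); auto. Qed.

Lemma cont_cst (c t : R) : continuous (fun _ => c) t.
Proof. apply continuous_const. Qed.

Lemma cont_id (t : R) : continuous (fun s => s) t.
Proof. apply continuous_id. Qed.

Lemma cont_Hw y z t : 0 <= t -> 0 <= y -> 0 < z -> continuous (Hw y z) t.
Proof.
  intros Ht Hy Hz. unfold Hw, Rdiv.
  apply cont_mul. apply cont_cst.
  apply cont_inv.
  apply cont_lin. apply cont_lin. apply cont_Sq. apply cont_id. apply cont_cst.
  assert (0 <= Sq y z t) by apply sqrt_pos. lra.
Qed.

Lemma cont_Kf y z A t : 0 <= t -> 0 <= y -> 0 < z -> 0 < A -> continuous (Kf y z A) t.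
Proof.
  intros Ht Hy Hz HA. unfold Kf.
  assert (0 <= Sq y z t) by apply sqrt_pos.
  apply (continuous_comp (fun s => (Sq y z s + s + (y+z)/2) / (Sq y z s + s + A)) ln).
  - unfold Rdiv. apply cont_mul.
    apply cont_lin. apply cont_lin. apply cont_Sq. apply cont_id. apply cont_cst.
    apply cont_inv. apply cont_lin. apply cont_lin. apply cont_Sq. apply cont_id. apply cont_cst.
    lra.
  - apply continuous_ln. apply Rdiv_lt_0_compat; lra.
Qed.

Lemma cont_Pf N t : 0 <= t -> 0 < N -> continuous (Pf N) t.
Proof.
  intros Ht HN. apply (@ex_derive_continuous R_AbsRing R_NormedModule). unfold Pf. auto_derive.
  repeat split; apply Rgt_not_eq; repeat apply Rmult_lt_0_compat; lra.
Qed.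

Lemma lim_right_cont (G : R -> R) : continuous G 0 -> filterlim G (at_right 0) (locally (G 0)).
Proof.
  intros H. eapply filterlim_filter_le_1. apply filter_le_within. exact H.
Qed.

Lemma lim_inf_bound (G : R -> R) (C : R) :
  (forall t, 1 < t -> Rabs (G t) <= C / t) -> filterlim G (Rbar_locally p_infty) (locally 0).
Proof.
  intros HB. apply (proj2 (filterlim_locally G 0)). intros eps.
  exists (Rmax 1 (Rabs C / eps)). intros t Ht.
  assert (H1 : 1 < t) by (eapply Rle_lt_trans; [apply Rmax_l | exact Ht]).
  assert (H2 : Rabs C / eps < t) by (eapply Rle_lt_trans; [apply Rmax_r | exact Ht]).
  change (Rabs (G t - 0) < eps). rewrite Rminus_0_r.
  eapply Rle_lt_trans. apply HB; auto.
  pose proof (cond_pos eps).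
  apply Rle_lt_trans with (Rabs C / t).
  { unfold Rdiv. apply Rmult_le_compat_r. left; apply Rinv_0_lt_compat; lra. apply Rle_abs. }
  apply (Rmult_lt_compat_r eps) in H2; auto. unfold Rdiv in H2. rewrite Rmult_assoc, Rinv_l, Rmult_1_r in H2 by lra.
  apply (Rmult_lt_reg_r t). lra. unfold Rdiv. rewrite Rmult_assoc, Rinv_l, Rmult_1_r by lra. lra.
Qed.

Lemma bound_Hw y z t : 0 < t -> 0 <= y -> 0 < z -> Rabs (Hw y z t) <= 2 / t.
Proof.
  intros Ht Hy Hz. unfold Hw.
  assert (0 <= Sq y z t) by apply sqrt_pos.
  rewrite Rabs_left. 
  - unfold Rdiv. replace (- (-2 * / (Sq y z t + t + z))) with (2 * / (Sq y z t + t + z)) by ring.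
    apply Rmult_le_compat_l. lra. apply Rinv_le_contravar; lra.
  - unfold Rdiv. apply Rmult_neg_pos. lra. apply Rinv_0_lt_compat; lra.
Qed.

Lemma ln_ge_1m (u : R) : 0 < u -> 1 - / u <= ln u.
Proof.
  intros Hu. assert (H := exp_ineq1_le (ln (/ u))).
  rewrite exp_ln in H by (apply Rinv_0_lt_compat; lra).
  rewrite ln_Rinv in H by lra. lra.
Qed.

Lemma bound_Kf y z A t : 0 < t -> 0 <= y -> 0 < z -> (y+z)/2 < A ->
  Rabs (Kf y z A t) <= (A - (y+z)/2) / t.
Proof.
  intros Ht Hy Hz HA. unfold Kf.
  assert (0 <= Sq y z t) by apply sqrt_pos.
  set (s := Sq y z t) in *. set (a := (y+z)/2) in *.
  assert (Ha : 0 < a) by (unfold a; lra).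
  set (u := (s + t + a) / (s + t + A)).
  assert (Hu0 : 0 < u) by (unfold u; apply Rdiv_lt_0_compat; lra).
  assert (Hu1 : u < 1).
  { unfold u. apply (Rmult_lt_reg_r (s+t+A)). lra. unfold Rdiv.
    rewrite Rmult_assoc, Rinv_l, Rmult_1_r by lra. lra. }
  assert (Hl : ln u < 0).
  { rewrite <- ln_1. apply ln_increasing; lra. }
  assert (Hl2 := ln_ge_1m u Hu0).
  rewrite Rabs_left by auto.
  assert (E : / u = (s+t+A)/(s+t+a)) by (unfold u; field; split; lra).
  rewrite E in Hl2.
  assert (E2 : (s+t+A)/(s+t+a) - 1 = (A - a)/(s+t+a)) by (field; lra).
  apply Rle_trans with ((A-a)/(s+t+a)). lra.
  unfold Rdiv. apply Rmult_le_compat_l. lra. apply Rinv_le_contravar; lra.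
Qed.

Lemma div_le_cross (a b c d : R) : 0 < b -> 0 < d -> a * d <= c * b -> a / b <= c / d.
Proof.
  intros Hb Hd H. unfold Rdiv.
  apply (Rmult_le_reg_r (b*d)). nra.
  replace (a * / b * (b * d)) with (a * d) by (field; lra).
  replace (c * / d * (b * d)) with (c * b) by (field; lra). exact H.
Qed.

Lemma bound_Pf N t : 0 < t -> 0 < N -> Rabs (Pf N t) <= 3 / t.
Proof.
  intros Ht HN. unfold Pf.
  assert (e1 : Rabs (-1/(t+N)) <= 1/t).
  { rewrite Rabs_left. replace (- (-1 / (t+N))) with (1 / (t+N)) by (field; lra).
    apply div_le_cross; nra.
    unfold Rdiv. apply Rmult_neg_pos. lra. apply Rinv_0_lt_compat; lra. }
  assert (e2 : Rabs (N/(t+N)^2) <= 1/t).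
  { rewrite Rabs_pos_eq. apply div_le_cross. nra. lra.
    replace ((t+N)^2) with ((t+N)*(t+N)) by ring. nra.
    unfold Rdiv. apply Rmult_le_pos. lra. left; apply Rinv_0_lt_compat. nra. }
  assert (e3 : Rabs (N^2/(3*(t+N)^3)) <= 1/t).
  { assert (0 < t + N) by lra.
    assert (0 < (t+N)^3) by (apply pow_lt; lra).
    rewrite Rabs_pos_eq. apply div_le_cross. lra. lra.
    replace (1 * (3 * (t + N) ^ 3)) with (3 * (t+N) * (t+N) * (t+N)) by ring.
    replace (N^2 * t) with (N * N * t) by ring.
    assert (N * N <= (t+N)*(t+N)) by nra.
    assert (N * N * t <= (t+N)*(t+N)*(t+N)) by nra. nra.
    unfold Rdiv. apply Rmult_le_pos. nra. left; apply Rinv_0_lt_compat. lra. }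
  unfold Rminus. eapply Rle_trans. apply Rabs_triang. rewrite Rabs_Ropp.
  eapply Rle_trans. apply Rplus_le_compat_r. apply Rabs_triang.
  replace (3/t) with (1/t + 1/t + 1/t) by (field; lra). lra.
Qed.



Lemma core_low (t x y z p q c r0 : R) :
  0 < t -> 0 < x -> 0 <= y -> 0 < z ->
  p*p = t+x -> q*q = t+y -> c*c = t+z -> r0*r0 = x ->
  0 < p -> 0 < q -> 0 < c -> 0 < r0 -> (y+z)/2 < 2*x ->
  3/(2*r0) * (/(q*((t+z)*c)) - 2/(q*c*(q*c+t+(4*x-(y+z)/2))))
  <= 3/2 * /(p*q) * /((t+z)*c).
Proof.
  intros Ht Hx Hy Hz hp hq hc hr pp pq pc pr Ha.
  set (a := (y+z)/2) in *.
  assert (Hpr : r0 <= p).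
  { destruct (Rle_lt_dec r0 p) as [|Hl]; auto. assert (0 < (r0 - p)*(r0+p)) by (apply Rmult_lt_0_compat; lra). nra. }
  assert (HS : q*c <= t + a).
  { assert (E1 : (q*c)*(q*c) = (t+y)*(t+z)) by (rewrite <- hq, <- hc; ring).
    assert (E2 : (t+a)*(t+a) - (q*c)*(q*c) = ((y-z)/2)*((y-z)/2)) by (rewrite E1; unfold a; field).
    assert (0 < q*c) by (apply Rmult_lt_0_compat; lra).
    assert (0 <= ((y-z)/2)*((y-z)/2)) by apply Rle_0_sqr.
    destruct (Rle_lt_dec (q*c) (t+a)) as [|Hl]; auto.
    assert (0 < (q*c - (t+a))*(q*c + (t+a))) by (apply Rmult_lt_0_compat; unfold a in *; lra).
    nra. }
  assert (h1 : (p - r0)*(q*c+t+(4*x-a)) <= (p-r0)*(2*t+4*x)).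
  { apply Rmult_le_compat_l; lra. }
  assert (h2 : p*(p+r0) >= t + 2*x).
  { assert (0 <= (p - r0)*r0) by (apply Rmult_le_pos; lra). nra. }
  assert (h3 : (p - r0)*(2*t+4*x)*(p+r0) = t*(2*t+4*x)) by nra.
  assert (h4 : t*(2*t+4*x) <= 2*(p*(p+r0))*(t+z)) by nra.
  assert (h5 : (p - r0)*(2*t+4*x) <= 2*p*(t+z)).
  { apply (Rmult_le_reg_r (p+r0)). lra. rewrite h3. nra. }
  assert (key : (p - r0)*(q*c+t+(4*x-a)) <= 2*p*(t+z)) by lra.
  assert (HD : 0 < q*c+t+(4*x-a)) by nra.
  replace (3/2 * /(p*q) * /((t+z)*c)) with (3/(2*r0) * (r0/p * /(q*((t+z)*c))))
    by (field; repeat split; nra).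
  apply Rmult_le_compat_l. apply Rlt_le, Rdiv_lt_0_compat; lra.
  assert (E : / (q * ((t + z) * c)) - r0/p * / (q * ((t + z) * c)) = (p - r0)/(p*q*(t+z)*c))
    by (field; repeat split; nra).
  assert (K : (p - r0)/(p*q*(t+z)*c) <= 2/(q*c*(q*c+t+(4*x-a)))).
  { apply div_le_cross. 
    assert (0 < p*q) by (apply Rmult_lt_0_compat; lra).
    assert (0 < (t+z)*c) by (apply Rmult_lt_0_compat; lra).
    assert (0 < q*c) by (apply Rmult_lt_0_compat; lra).
    replace (p*q*(t+z)*c) with ((p*q)*((t+z)*c)) by ring. apply Rmult_lt_0_compat; lra.
    assert (0 < q*c) by (apply Rmult_lt_0_compat; lra).
    apply Rmult_lt_0_compat; lra.
    replace ((p - r0) * (q * c * (q * c + t + (4 * x - a)))) with ((q*c)*((p - r0)*(q*c+t+(4*x-a)))) by ring.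
    replace (2 * (p * q * (t + z) * c)) with ((q*c)*(2*p*(t+z))) by ring.
    apply Rmult_le_compat_l; [left; apply Rmult_lt_0_compat; lra | lra]. }
  lra.
Qed.

Lemma core_up (t x y z p q c r0 g : R) :
  0 < t -> 0 < x -> 0 <= y -> 0 < z ->
  p*p = t+x -> q*q = t+y -> c*c = t+z -> r0*r0 = x ->
  0 < p -> 0 < q -> 0 < c -> 0 < r0 -> 0 <= g -> g*g = y*z ->
  3/2 * /(p*q) * /((t+z)*c) <=
  3/(2*r0) * ((1 + z/(2*x)) * /(q*((t+z)*c)) - 1/(q*c*(q*c+t+(2*x-g)))
              - (t^2/(t+(x+y+z))^4)/8).
Proof.
  intros Ht Hx Hy Hz hp hq hc hr pp pq pc pr pg hg.
  set (N := x+y+z).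
  assert (Hpr : r0 <= p).
  { destruct (Rle_lt_dec r0 p) as [|Hl]; auto. assert (0 < (r0 - p)*(r0+p)) by (apply Rmult_lt_0_compat; lra). nra. }
  assert (Hga : g <= (y+z)/2).
  { destruct (Rle_lt_dec g ((y+z)/2)) as [|Hl]; auto.
    assert (0 < (g - (y+z)/2)*(g+(y+z)/2)) by (apply Rmult_lt_0_compat; lra).
    assert (0 <= ((y-z)/2)*((y-z)/2)) by apply Rle_0_sqr. nra. }
  set (S := q*c).
  assert (pS : 0 < S) by (apply Rmult_lt_0_compat; lra).
  assert (E1 : S*S = (t+y)*(t+z)) by (unfold S; rewrite <- hq, <- hc; ring).
  assert (HS : t + g <= S).
  { destruct (Rle_lt_dec (t+g) S) as [|Hl]; auto.
    assert (0 < (t+g - S)*(t+g+S)) by (apply Rmult_lt_0_compat; lra).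
    assert (0 <= t*((y+z) - 2*g)) by (apply Rmult_le_pos; lra). nra. }
  set (W := /(q*((t+z)*c))).
  assert (pW : 0 < W).
  { unfold W. apply Rinv_0_lt_compat. apply Rmult_lt_0_compat. lra. apply Rmult_lt_0_compat; lra. }
  set (u := r0/p).
  assert (Hu0 : 0 < u) by (unfold u; apply Rdiv_lt_0_compat; lra).
  assert (Hu1 : u <= 1).
  { unfold u. apply (Rmult_le_reg_r p). lra. unfold Rdiv. rewrite Rmult_assoc, Rinv_l by lra. lra. }
  set (m := t/(t+x)).
  assert (Hm : m = 1 - u*u).
  { unfold m, u. replace (r0/p*(r0/p)) with ((r0*r0)/(p*p)) by (field; lra).
    rewrite hr, hp. field. lra. }
  assert (Ha : 1 - u >= m/2 + m*m/8).
  { rewrite Hm. set (e := 1 - u).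
    assert (0 <= e) by (unfold e; lra). assert (e <= 1) by (unfold e; lra).
    replace u with (1 - e) by (unfold e; ring).
    assert (0 <= e*e*e*(4-e)).
    { apply Rmult_le_pos. apply Rmult_le_pos. apply Rmult_le_pos; lra. lra. lra. }
    nra. }
  assert (Hc : W*(1-u) >= W*(m/2) + W*(m*m/8)).
  { rewrite <- Rmult_plus_distr_l. apply Rle_ge. apply Rmult_le_compat_l; lra. }
  assert (Hb : W * t = 1/S - z*W).
  { unfold W, S. field. repeat split; lra. }
  assert (Hd : W*(m/2) >= 1/(S*(S+t+(2*x-g))) - z*W/(2*x)).
  { replace (W*(m/2)) with ((W*t)/(2*(t+x))) by (unfold m; field; lra).
    rewrite Hb.
    replace ((1/S - z*W)/(2*(t+x))) with (1/(S*(2*(t+x))) - z*W/(2*(t+x))) by (field; lra).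
    assert (1/(S*(S+t+(2*x-g))) <= 1/(S*(2*(t+x)))).
    { apply div_le_cross. apply Rmult_lt_0_compat; lra. apply Rmult_lt_0_compat; lra.
      rewrite !Rmult_1_l. apply Rmult_le_compat_l; lra. }
    assert (z*W/(2*(t+x)) <= z*W/(2*x)).
    { apply div_le_cross. lra. lra. 
      assert (0 < z*W) by (apply Rmult_lt_0_compat; lra). nra. }
    lra. }
  assert (He : W*(m*m/8) >= (t^2/(t+N)^4)/8).
  { assert (HM : 0 < t + N) by (unfold N; lra).
    assert (HqcM : S <= t + N).
    { destruct (Rle_lt_dec S (t+N)) as [|Hl]; auto.
      assert (0 < (S - (t+N))*(S+(t+N))) by (apply Rmult_lt_0_compat; lra).
      assert ((t+y)*(t+z) <= (t+N)*(t+N)).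
      { apply Rmult_le_compat; unfold N; lra. }
      nra. }
    assert (Hden : q*((t+z)*c)*((t+x)*(t+x)) <= (t+N)^4).
    { replace (q*((t+z)*c)) with (S*(t+z)) by (unfold S; ring).
      replace ((t+N)^4) with (((t+N)*(t+N))*((t+N)*(t+N))) by ring.
      apply Rmult_le_compat.
      - apply Rmult_le_pos; lra.
      - apply Rmult_le_pos; lra.
      - apply Rmult_le_compat; unfold N in *; lra.
      - apply Rmult_le_compat; unfold N in *; lra. }
    unfold W, m.
    replace (/ (q * ((t + z) * c)) * (t / (t + x) * (t / (t + x)) / 8))
      with ((t^2) / (q*((t+z)*c)*((t+x)*(t+x))) / 8) by (field; repeat split; lra).
    apply Rle_ge. unfold Rdiv at 2 4. apply Rmult_le_compat_r. lra.
    apply div_le_cross. apply pow_lt; lra.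
    apply Rmult_lt_0_compat. apply Rmult_lt_0_compat. lra. apply Rmult_lt_0_compat; lra.
    apply Rmult_lt_0_compat; lra.
    apply Rmult_le_compat_l. apply pow_le; lra. exact Hden. }
  replace (3/2 * /(p*q) * /((t+z)*c)) with (3/(2*r0) * (u * W))
    by (unfold u, W; field; repeat split; lra).
  apply Rmult_le_compat_l. apply Rlt_le, Rdiv_lt_0_compat; lra.
  fold S.
  assert (W*(1-u) >= 1/(S*(S+t+(2*x-g))) - z*W/(2*x) + (t^2/(t+N)^4)/8) by lra.
  replace ((1 + z/(2*x)) * W) with (W + z*W/(2*x)) by (field; lra).
  lra.
Qed.

Lemma der_lin3 (A B C : R -> R) (dA dB dC c1 c2 c3 t : R) :
  is_derive A t dA -> is_derive B t dB -> is_derive C t dC ->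
  is_derive (fun s => c1 * A s + c2 * B s + c3 * C s) t (c1*dA + c2*dB + c3*dC).
Proof.
  intros HA HB HC.
  apply (is_derive_plus (fun s => c1 * A s + c2 * B s) (fun s => c3 * C s)).
  apply (is_derive_plus (fun s => c1 * A s) (fun s => c2 * B s)).
  apply is_derive_scal; auto. apply is_derive_scal; auto. apply is_derive_scal; auto.
Qed.

Lemma cont_lin3 (A B C : R -> R) (c1 c2 c3 t : R) :
  continuous A t -> continuous B t -> continuous C t ->
  continuous (fun s => c1 * A s + c2 * B s + c3 * C s) t.
Proof.
  intros HA HB HC. apply cont_lin. apply cont_lin.
  apply cont_mul; auto; apply cont_cst. apply cont_mul; auto; apply cont_cst.
  apply cont_mul; auto; apply cont_cst.
Qed.

Lemma bound_lin3 (A B C : R -> R) (c1 c2 c3 al be ga t : R) : 0 < t ->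
  Rabs (A t) <= al / t -> Rabs (B t) <= be / t -> Rabs (C t) <= ga / t ->
  Rabs (c1 * A t + c2 * B t + c3 * C t) <= (Rabs c1 * al + Rabs c2 * be + Rabs c3 * ga) / t.
Proof.
  intros Ht HA HB HC.
  eapply Rle_trans. apply Rabs_triang.
  eapply Rle_trans. apply Rplus_le_compat_r. apply Rabs_triang.
  rewrite !Rabs_mult.
  assert (Rabs c1 * Rabs (A t) <= Rabs c1 * (al/t)) by (apply Rmult_le_compat_l; auto; apply Rabs_pos).
  assert (Rabs c2 * Rabs (B t) <= Rabs c2 * (be/t)) by (apply Rmult_le_compat_l; auto; apply Rabs_pos).
  assert (Rabs c3 * Rabs (C t) <= Rabs c3 * (ga/t)) by (apply Rmult_le_compat_l; auto; apply Rabs_pos).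
  replace ((Rabs c1 * al + Rabs c2 * be + Rabs c3 * ga) / t) with
    (Rabs c1 * (al/t) + Rabs c2 * (be/t) + Rabs c3 * (ga/t)) by (field; lra).
  lra.
Qed.

Lemma ln_div_opp (u w : R) : 0 < u -> 0 < w -> ln (u/w) = - ln (w/u).
Proof. intros. rewrite !ln_div by auto. ring. Qed.

Lemma f_form x y z t : 0 < t -> 0 < x -> 0 <= y -> 0 < z ->
  RD_integrand x y z t = 3/2 * /(sqrt (t+x) * sqrt (t+y)) * /((t+z)*sqrt (t+z)).
Proof. intros. unfold RD_integrand. rewrite sqrt_mult by lra. reflexivity. Qed.

Lemma Sq_form y z t : 0 < t -> 0 <= y -> 0 < z -> Sq y z t = sqrt (t+y) * sqrt (t+z).
Proof. intros. unfold Sq. apply sqrt_mult; lra. Qed.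

Lemma core_0 (t x y z p q c r0 : R) :
  0 < t -> 0 < x -> 0 <= y -> 0 < z ->
  p*p = t+x -> r0*r0 = x ->
  0 < p -> 0 < q -> 0 < c -> 0 < r0 ->
  0 <= 3/2 * /(p*q) * /((t+z)*c) <= 3/(2*r0) * /(q*((t+z)*c)).
Proof.
  intros Ht Hx Hy Hz hp hr pp pq pc pr.
  assert (Hpr : r0 <= p).
  { destruct (Rle_lt_dec r0 p) as [|Hl]; auto. assert (0 < (r0 - p)*(r0+p)) by (apply Rmult_lt_0_compat; lra). nra. }
  assert (0 < p*q) by (apply Rmult_lt_0_compat; lra).
  assert (0 < (t+z)*c) by (apply Rmult_lt_0_compat; lra).
  assert (0 < q*((t+z)*c)) by (apply Rmult_lt_0_compat; lra).
  split.
  - apply Rmult_le_pos. apply Rmult_le_pos. lra. left; apply Rinv_0_lt_compat; lra.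
    left; apply Rinv_0_lt_compat; lra.
  - replace (3/2 * /(p*q) * /((t+z)*c)) with (3/(2*r0) * /(q*((t+z)*c)) * (r0/p))
      by (field; repeat split; lra).
    rewrite <- (Rmult_1_r (3/(2*r0) * /(q*((t+z)*c)))) at 2.
    apply Rmult_le_compat_l.
    apply Rmult_le_pos. left; apply Rdiv_lt_0_compat; lra. left; apply Rinv_0_lt_compat; lra.
    apply (Rmult_le_reg_r p). lra. unfold Rdiv. rewrite Rmult_assoc, Rinv_l by lra. lra.
Qed.

Definition GL (y z A N c1 c2 c3 s : R) := c1*Hw y z s + c2*Kf y z A s + c3*Pf N s.
Definition gL (y z A N c1 c2 c3 t : R) :=
  c1*wf y z t + c2*((A - (y+z)/2)/(Sq y z t*(Sq y z t+t+A))) + c3*(t^2/(t+N)^4).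

Section L3.
Variables (y z A N c1 c2 c3 : R).
Hypotheses (Hy : 0 <= y) (Hz : 0 < z) (HA : (y+z)/2 < A) (HN : 0 < N).

Lemma GL_der t : 0 < t -> is_derive (GL y z A N c1 c2 c3) t (gL y z A N c1 c2 c3 t).
Proof.
  intros Ht. unfold GL, gL. apply der_lin3.
  apply D1; auto. apply D2; auto; lra. apply D3; auto.
Qed.

Lemma gL_cont t : 0 < t -> continuous (gL y z A N c1 c2 c3) t.
Proof.
  intros Ht. unfold gL.
  apply (cont_lin3 (wf y z) (fun t => (A - (y+z)/2)/(Sq y z t*(Sq y z t+t+A)))
                   (fun t => t^2/(t+N)^4)).
  - apply (@ex_derive_continuous R_AbsRing R_NormedModule). unfold wf. auto_derive.
    assert (0 < sqrt (t+y)) by (apply sqrt_lt_R0; lra).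
    assert (0 < sqrt (t+z)) by (apply sqrt_lt_R0; lra).
    repeat split; try lra. apply Rgt_not_eq. repeat apply Rmult_lt_0_compat; lra.
  - apply (@ex_derive_continuous R_AbsRing R_NormedModule). unfold Sq. auto_derive.
    assert (0 < sqrt ((t+y)*(t+z))) by (apply sqrt_lt_R0; nra).
    split; [nra|split; [nra|split; [apply Rgt_not_eq; apply Rmult_lt_0_compat; lra|exact I]]].
  - apply (@ex_derive_continuous R_AbsRing R_NormedModule). auto_derive.
    repeat split. apply Rgt_not_eq. repeat apply Rmult_lt_0_compat; lra.
Qed.

Lemma GL_lim0 : filterlim (GL y z A N c1 c2 c3) (at_right 0) (locally (GL y z A N c1 c2 c3 0)).
Proof.
  apply lim_right_cont. unfold GL. apply cont_lin3.
  apply cont_Hw; lra. apply cont_Kf; lra. apply cont_Pf; lra.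
Qed.

Lemma GL_liminf : filterlim (GL y z A N c1 c2 c3) (Rbar_locally p_infty) (locally 0).
Proof.
  apply (lim_inf_bound _ (Rabs c1 * 2 + Rabs c2 * (A - (y+z)/2) + Rabs c3 * 3)).
  intros t Ht. unfold GL. apply bound_lin3. lra.
  apply bound_Hw; lra. apply bound_Kf; lra. apply bound_Pf; lra.
Qed.

Lemma int_lin3 : is_RInt_gen (gL y z A N c1 c2 c3) (at_right 0) (Rbar_locally p_infty)
                   (0 - GL y z A N c1 c2 c3 0).
Proof.
  apply (deriv_gen (GL y z A N c1 c2 c3)). apply GL_der. apply gL_cont. apply GL_lim0. apply GL_liminf.
Qed.
End L3.

Lemma cont_f x y z t : 0 < t -> 0 < x -> 0 <= y -> 0 < z -> continuous (RD_integrand x y z) t.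
Proof.
  intros Ht Hx Hy Hz.
  apply (@ex_derive_continuous R_AbsRing R_NormedModule). unfold RD_integrand. auto_derive.
  assert (0 < sqrt ((t+x)*(t+y))) by (apply sqrt_lt_R0; nra).
  assert (0 < sqrt (t+z)) by (apply sqrt_lt_R0; lra).
  split; [nra|split; [lra|split; [lra|split; [apply Rgt_not_eq; apply Rmult_lt_0_compat; lra|exact I]]]].
Qed.

Lemma Hw0 y z : 0 <= y -> 0 < z -> Hw y z 0 = -2 / (sqrt (y*z) + z).
Proof. intros. unfold Hw, Sq. rewrite !Rplus_0_l. f_equal. ring. Qed.

Lemma Kf0 y z A : Kf y z A 0 = ln ((sqrt (y*z) + (y+z)/2) / (sqrt (y*z) + A)).
Proof. unfold Kf, Sq. rewrite !Rplus_0_l, !Rplus_0_r. reflexivity. Qed.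

Lemma Pf0 N : 0 < N -> Pf N 0 = - / (3*N).
Proof. intros. unfold Pf. rewrite !Rplus_0_l. field. lra. Qed.

Lemma sqrt_facts u : 0 < u -> 0 < sqrt u /\ sqrt u * sqrt u = u.
Proof. intros. split. apply sqrt_lt_R0; lra. apply sqrt_sqrt; lra. Qed.

Theorem mainTheorem8 (x y z : R) (hx : 0 < x) (hy : 0 <= y) (hz : 0 < z)
  (hg : sqrt (y * z) < x) (ha : (y + z) / 2 < 2 * x) :
  let a := (y + z) / 2 in
  let g := sqrt (y * z) in
  exists r : R,
    / (1 - g / x) * ln (2 * x / (a + g)) - 2 * z / (g + z) < r /\
    r < / (1 - a / (2 * x)) * ln (8 * x / (a + g)) /\
    is_RD x y z (3 / sqrt x * (1 / (g + z) - r / (4 * x))).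
Proof.
  intros a g.
  assert (Ea : a = (y+z)/2) by reflexivity.
  assert (Eg : g = sqrt (y*z)) by reflexivity.
  clearbody a g.
  destruct (sqrt_facts x hx) as [pr0 hr0].
  set (r0 := sqrt x) in *.
  assert (pg : 0 <= g) by (rewrite Eg; apply sqrt_pos).
  assert (hgg : g * g = y * z) by (rewrite Eg; apply sqrt_sqrt; nra).
  assert (pa : 0 < a) by lra.
  assert (Hga : g <= a).
  { destruct (Rle_lt_dec g a) as [|Hl]; auto.
    assert (0 < (g - a)*(g+a)) by (apply Rmult_lt_0_compat; lra).
    assert (0 <= ((y-z)/2)*((y-z)/2)) by apply Rle_0_sqr. nra. }
  set (N := x+y+z).
  assert (pN : 0 < N) by (unfold N; lra).
  set (k := 3/(2*r0)).
  assert (pk : 0 < k) by (unfold k; apply Rdiv_lt_0_compat; lra).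
  set (A1 := 4*x - a).
  assert (HA1 : (y+z)/2 < A1) by (unfold A1; lra).
  set (f := RD_integrand x y z).
  assert (PT : forall t, 0 < t -> exists p q c,
     0 < p /\ 0 < q /\ 0 < c /\ p*p = t+x /\ q*q = t+y /\ c*c = t+z /\
     f t = 3/2 * /(p*q) * /((t+z)*c) /\ wf y z t = /(q*((t+z)*c)) /\ Sq y z t = q*c).
  { intros t Ht.
    destruct (sqrt_facts (t+x)) as [pp hp]; [lra|].
    destruct (sqrt_facts (t+y)) as [pq hq]; [lra|].
    destruct (sqrt_facts (t+z)) as [pc hc]; [lra|].
    exists (sqrt (t+x)), (sqrt (t+y)), (sqrt (t+z)).
    repeat split; auto.
    unfold f. apply f_form; auto.
    apply Sq_form; auto. }
  set (G0 := GL y z A1 N k 0 0).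
  set (g0 := gL y z A1 N k 0 0).
  destruct (exists_gen f g0 G0 (G0 0) 0) as [v Hv].
  - intros t Ht. apply cont_f; auto.
  - intros t Ht. destruct (PT t Ht) as (p & q & c & pp & pq & pc & hp & hq & hc & ef & ew & es).
    unfold g0, gL. rewrite ef, ew.
    destruct (core_0 t x y z p q c r0) as [C1 C2]; auto.
    rewrite Rabs_pos_eq by auto. fold k in C2. lra.
  - intros t Ht. exact (GL_der y z A1 N k 0 0 hy hz HA1 pN t Ht).
  - intros t Ht. exact (gL_cont y z A1 N k 0 0 hy hz HA1 pN t Ht).
  - exact (GL_lim0 y z A1 N k 0 0 hy hz HA1 pN).
  - exact (GL_liminf y z A1 N k 0 0 hy hz HA1 pN).
  -
    assert (I0 := int_lin3 y z A1 N k 0 0 hy hz HA1 pN). fold G0 g0 in I0.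
    assert (V0 : 0 - G0 0 = 2*k/(g+z)).
    { unfold G0, GL. rewrite Hw0 by auto. rewrite <- Eg. field. lra. }
    rewrite V0 in I0.
    assert (B0 : v <= 2*k/(g+z)).
    { assert (M := is_RInt_gen_minus g0 f _ _ I0 Hv).
      assert (0 <= minus (2*k/(g+z)) v).
      { apply (nonneg_gen _ _ M). intros t Ht.
        destruct (PT t Ht) as (p & q & c & pp & pq & pc & hp & hq & hc & ef & ew & es).
        unfold g0, gL. rewrite ef, ew.
        destruct (core_0 t x y z p q c r0) as [C1 C2]; auto. fold k in C2.
        change (0 <= k * / (q * ((t + z) * c)) + 0 * ((A1 - (y + z) / 2) / (Sq y z t * (Sq y z t + t + A1))) +
          0 * (t ^ 2 / (t + N) ^ 4) - 3 / 2 * / (p * q) * / ((t + z) * c)). lra. }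
      change (0 <= 2*k/(g+z) - v) in H. lra. }
    set (c2l := -(k*(2/(A1-a)))).
    assert (Ilow := int_lin3 y z A1 N k c2l 0 hy hz HA1 pN).
    set (Lm := ln ((g + a)/(g + A1))).
    assert (Vlow : 0 - GL y z A1 N k c2l 0 0 = k*(2/(g+z) + (2/(A1-a))*Lm)).
    { unfold GL, c2l, Lm. rewrite Hw0, Kf0 by auto. rewrite <- Eg, <- Ea. field. split; lra. }
    rewrite Vlow in Ilow.
    assert (Blow : k*(2/(g+z) + (2/(A1-a))*Lm) <= v).
    { assert (M := is_RInt_gen_minus f (gL y z A1 N k c2l 0) _ _ Hv Ilow).
      assert (H0 : 0 <= minus v (k*(2/(g+z) + (2/(A1-a))*Lm))).
      { apply (nonneg_gen _ _ M). intros t Ht.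
        destruct (PT t Ht) as (p & q & c & pp & pq & pc & hp & hq & hc & ef & ew & es).
        change (0 <= f t - gL y z A1 N k c2l 0 t).
        unfold gL. rewrite ef, ew, es.
        assert (C := core_low t x y z p q c r0 Ht hx hy hz hp hq hc hr0 pp pq pc pr0 ha).
        assert (0 < q*c) by (apply Rmult_lt_0_compat; lra).
        assert (0 < q*c + t + A1) by (unfold A1; lra).
        replace (k * / (q * ((t + z) * c)) + c2l * ((A1 - (y + z) / 2) / (q * c * (q * c + t + A1))) +
                 0 * (t ^ 2 / (t + N) ^ 4))
          with (3 / (2 * r0) * (/ (q * ((t + z) * c)) - 2 / (q * c * (q * c + t + (4 * x - (y + z) / 2)))))
          by (unfold c2l, k, A1; rewrite <- Ea; field; repeat split; try lra; unfold A1 in *; lra).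
        lra. }
      change (0 <= v - k*(2/(g+z) + (2/(A1-a))*Lm)) in H0. lra. }
    exists (4*x*(1/(g+z) - v*r0/3)).
    assert (Hk : k * r0 = 3/2) by (unfold k; field; lra).
    split; [|split].
    +
      assert (Hr0 : 0 <= 4*x*(1/(g+z) - v*r0/3)).
      { assert (v * r0 <= 3/(g+z)).
        { apply Rle_trans with (2*k/(g+z)*r0). apply Rmult_le_compat_r; lra.
          replace (2*k/(g+z)*r0) with (2*(k*r0)/(g+z)) by (field; lra). rewrite Hk. 
          right; field; lra. }
        apply Rmult_le_pos. lra.
        assert (v*r0/3 <= 1/(g+z)).
        { replace (1/(g+z)) with ((3/(g+z))/3) by (field; lra). lra. }
        lra. }
      assert (Hxg : 0 < 1 - g/x).
      { assert (g/x < 1). { apply (Rmult_lt_reg_r x). lra. unfold Rdiv. rewrite Rmult_assoc, Rinv_l by lra. lra. } lra. }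
      assert (Einv : / (1 - g/x) = x/(x-g)) by (field; split; lra).
      rewrite Einv.
      set (Lg := ln (2*x/(a+g))).
      assert (Hz2 : 0 < 2*z/(g+z)) by (apply Rdiv_lt_0_compat; lra).
      destruct (Rlt_le_dec (a+g) (2*x)) as [Hag|Hag].
      * set (A2 := 2*x - g).
        assert (HA2 : (y+z)/2 < A2) by (unfold A2; lra).
        set (c1u := k*(1+z/(2*x))). set (c2u := -(k*(1/(A2-a)))). set (c3u := -(k/8)).
        assert (Iup := int_lin3 y z A2 N c1u c2u c3u hy hz HA2 pN).
        assert (ELg : ln ((g + a)/(g + A2)) = - Lg).
        { unfold Lg, A2. replace (g + (2*x - g)) with (2*x) by ring.
          rewrite Rplus_comm. apply ln_div_opp; lra. }
        assert (Vup : 0 - GL y z A2 N c1u c2u c3u 0 =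
                      k*((1+z/(2*x))*(2/(g+z)) - Lg/(A2-a) - /(24*N))).
        { unfold GL. rewrite Hw0, Kf0, Pf0 by auto. rewrite <- Eg, <- Ea. rewrite ELg.
          unfold c1u, c2u, c3u. field. unfold A2; repeat split; lra. }
        rewrite Vup in Iup.
        assert (Bup : v <= k*((1+z/(2*x))*(2/(g+z)) - Lg/(A2-a) - /(24*N))).
        { assert (M := is_RInt_gen_minus (gL y z A2 N c1u c2u c3u) f _ _ Iup Hv).
          assert (H0 : 0 <= minus (k*((1+z/(2*x))*(2/(g+z)) - Lg/(A2-a) - /(24*N))) v).
          { apply (nonneg_gen _ _ M). intros t Ht.
            destruct (PT t Ht) as (p & q & c & pp & pq & pc & hp & hq & hc & ef & ew & es).
            change (0 <= gL y z A2 N c1u c2u c3u t - f t).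
            unfold gL. rewrite ef, ew, es.
            assert (C := core_up t x y z p q c r0 g Ht hx hy hz hp hq hc hr0 pp pq pc pr0 pg hgg).
            assert (0 < q*c) by (apply Rmult_lt_0_compat; lra).
            assert (0 < q*c + t + A2) by (unfold A2; lra).
            replace (c1u * / (q * ((t + z) * c)) + c2u * ((A2 - (y + z) / 2) / (q * c * (q * c + t + A2))) +
                     c3u * (t ^ 2 / (t + N) ^ 4))
              with (3/(2*r0) * ((1 + z/(2*x)) * /(q*((t+z)*c)) - 1/(q*c*(q*c+t+(2*x-g)))
                     - (t^2/(t+(x+y+z))^4)/8))
              by (unfold c1u, c2u, c3u, k, A2, N; rewrite <- Ea; field; repeat split; try lra;
                  unfold A2 in *; lra).
            lra. }
          change (0 <= k*((1+z/(2*x))*(2/(g+z)) - Lg/(A2-a) - /(24*N)) - v) in H0. lra. }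
        assert (Hvr : v * r0 <= (3/2)*((1+z/(2*x))*(2/(g+z)) - Lg/(A2-a) - /(24*N))).
        { rewrite <- Hk. replace (k * r0 * ((1 + z / (2 * x)) * (2 / (g + z)) - Lg / (A2 - a) - / (24 * N)))
            with ((k*((1+z/(2*x))*(2/(g+z)) - Lg/(A2-a) - /(24*N)))*r0) by ring.
          apply Rmult_le_compat_r; lra. }
        assert (Hr1 : 4*x*(1/(g+z) - v*r0/3) >= -2*z/(g+z) + 2*x*Lg/(A2-a) + x/(12*N)).
        { apply Rle_ge.
          apply Rle_trans with (4*x*(1/(g+z) - ((3/2)*((1+z/(2*x))*(2/(g+z)) - Lg/(A2-a) - /(24*N)))/3)).
          - right. field. unfold A2; repeat split; lra.
          - apply Rmult_le_compat_l. lra. lra. }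
        assert (HLg : 0 < Lg).
        { unfold Lg. rewrite <- ln_1. apply ln_increasing. lra.
          apply (Rmult_lt_reg_r (a+g)). lra. unfold Rdiv. rewrite Rmult_assoc, Rinv_l by lra. lra. }
        assert (Hcmp : x/(x-g) <= 2*x/(A2-a)).
        { apply div_le_cross. lra. unfold A2; lra. unfold A2. nra. }
        assert (x/(x-g)*Lg <= 2*x/(A2-a)*Lg) by (apply Rmult_le_compat_r; lra).
        assert (0 < x/(12*N)) by (apply Rdiv_lt_0_compat; lra).
        replace (2*x*Lg/(A2-a)) with (2*x/(A2-a)*Lg) in Hr1 by (field; unfold A2; lra).
        replace (2*z/(g+z)) with (-(-2*z/(g+z))) by (field; lra).
        lra.
      * assert (HLg : Lg <= 0).
        { unfold Lg. rewrite <- ln_1. apply ln_le. apply Rdiv_lt_0_compat; lra.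
          apply (Rmult_le_reg_r (a+g)). lra. unfold Rdiv. rewrite Rmult_assoc, Rinv_l by lra. lra. }
        assert (x/(x-g)*Lg <= 0).
        { assert (0 < x/(x-g)) by (apply Rdiv_lt_0_compat; lra). nra. }
        lra.
    +
      set (Lh := ln ((g + A1)/(g + a))).
      assert (ELm : Lm = - Lh) by (unfold Lm, Lh; apply ln_div_opp; unfold A1; lra).
      assert (Hvr : (3/2)*(2/(g+z) + (2/(A1-a))*Lm) <= v * r0).
      { rewrite <- Hk. replace (k * r0 * (2/(g+z) + (2/(A1-a))*Lm))
            with ((k*(2/(g+z) + (2/(A1-a))*Lm))*r0) by ring.
        apply Rmult_le_compat_r; lra. }
      assert (Hr1 : 4*x*(1/(g+z) - v*r0/3) <= 4*x/(A1-a)*Lh).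
      { apply Rle_trans with (4*x*(1/(g+z) - ((3/2)*(2/(g+z) + (2/(A1-a))*Lm))/3)).
        - apply Rmult_le_compat_l. lra. lra.
        - right. rewrite ELm. field. split; unfold A1; lra. }
      assert (Einv : / (1 - a/(2*x)) = 4*x/(A1-a)) by (unfold A1; field; split; lra).
      rewrite Einv.
      assert (HL : Lh < ln (8*x/(a+g))).
      { unfold Lh. apply ln_increasing. apply Rdiv_lt_0_compat; unfold A1; lra.
        rewrite (Rplus_comm g a). unfold Rdiv. apply Rmult_lt_compat_r.
        apply Rinv_0_lt_compat; lra. unfold A1; lra. }
      assert (0 < 4*x/(A1-a)) by (apply Rdiv_lt_0_compat; unfold A1; lra).
      assert (4*x/(A1-a)*Lh < 4*x/(A1-a)*ln (8*x/(a+g))) by (apply Rmult_lt_compat_l; auto).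
      lra.
    + unfold is_RD.
      assert (E : 3 / r0 * (1 / (g + z) - 4 * x * (1 / (g + z) - v * r0 / 3) / (4 * x)) = v)
        by (field; split; lra).
      rewrite E. exact Hv.
Qed.
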